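(* Let $G$ be any graph and $s\geqslant 1$ an integer. Let $G^+=\pi(G_1,G_2)$, where $G_1,G_2$ are two disjoint copies of $G$. Then $G^+$ is $\mathbf{E_s}$ if and only if $G$ is $\mathbf{E_{s-1}}$.
   Context: All graphs are finite and simple. For two disjoint graphs $G$ and $H$, $\pi(G,H)$ is the graph obtained from the disjoint union of $G$ and $H$ by adding new vertices $\Pi_G=\{\pi_u: u\in V(G)\}$ and $\Pi_H=\{\pi_u:u\in V(H)\}$, making $(\Pi_G,\Pi_H)$ a complete bipartite graph (every vertex of $\Pi_G$ adjacent to every vertex of $\Pi_H$, no edges inside $\Pi_G$ or inside $\Pi_H$), and adding the edge $u\pi_u$ for each $u\in V(G)\cup V(H)$. For a positive integer $t$, a graph is $t$-extendable if every independent set of size exactly $t$ is contained in a maximum independent set. For $s\geqslant1$, a graph is $\mathbf{E_s}$ if it is $t$-extendable for every $t\in[s]$; by convention every graph is $\mathbf{E_0}$. *)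

(* Defs.v *)
(* Simple graphs as symmetric irreflexive relations on a finType. *)
From mathcomp Require Import all_boot.
Set Implicit Arguments. Unset Strict Implicit. Unset Printing Implicit Defensive.

Section Defs.
Variable T : finType.
Variable e : rel T.

Definition independent (S : {set T}) : Prop :=
  forall x y, x \in S -> y \in S -> ~~ e x y.

Definition max_independent (S : {set T}) : Prop :=
  independent S /\ forall S' : {set T}, independent S' -> #|S'| <= #|S|.

Definition extendable (t : nat) : Prop :=
  forall S : {set T}, independent S -> #|S| = t ->
    exists M : {set T}, max_independent M /\ S \subset M.

(* E_s: t-extendable for every t in [s] = {1,...,s}; E_0 holds vacuously. *)
Definition E_s (s : nat) : Prop :=
  forall t, 1 <= t <= s -> extendable t.
End Defs.

(* pi(G,H): vertices (x, false) are the vertices x of G + H (disjoint union,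
   inl for G, inr for H); vertices (x, true) are the new vertices pi_x. *)
Definition pi_rel (T1 T2 : finType) (e1 : rel T1) (e2 : rel T2)
  : rel ((T1 + T2) * bool) :=
  fun a b =>
    match a, b with
    | (inl u, false), (inl v, false) => e1 u v
    | (inr u, false), (inr v, false) => e2 u v
    | (x, false), (y, true) => x == y
    | (x, true), (y, false) => x == y
    | (inl _, true), (inr _, true) => true
    | (inr _, true), (inl _, true) => true
    | _, _ => false
    end.

(* Main.v *)
Require Import Defs.
From mathcomp Require Import all_boot.
From mathcomp Require Import zify.
Set Implicit Arguments. Unset Strict Implicit. Unset Printing Implicit Defensive.

Section Aux.
Variable T : finType.
Variable e : rel T.
Hypothesis e_sym : symmetric e.
Hypothesis e_irr : irreflexive e.

Local Notation V := ((T + T) * bool)%type.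
Local Notation E := (pi_rel e e).

Definition A1 (M : {set V}) := [set u | (inl u, false) \in M].
Definition A2 (M : {set V}) := [set u | (inr u, false) \in M].
Definition B1 (M : {set V}) := [set u | (inl u, true) \in M].
Definition B2 (M : {set V}) := [set u | (inr u, true) \in M].

Lemma card_split (M : {set V}) : #|M| = #|A1 M| + #|A2 M| + #|B1 M| + #|B2 M|.
Proof.
rewrite -!sum1dep_card.
rewrite !(big_mkcond (fun x => _ \in _)) /=.
rewrite -sum1_card big_mkcond /=.
have -> : \sum_(x : V) (if x \in M then 1 else 0) = \sum_(a : T+T) \sum_(b:bool) (if (a,b) \in M then 1 else 0).
  by rewrite pair_bigA; apply eq_bigr => [[a b]].
rewrite big_sumType /=.
rewrite !(eq_bigr _ (fun i _ => big_bool _ _)) /= !big_split /=.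
rewrite /A1 /A2 /B1 /B2 /=.
lia.
Qed.

Definition mk (a1 a2 b1 b2 : {set T}) : {set V} :=
  [set x : V | match x with
   | (inl u, false) => u \in a1
   | (inr u, false) => u \in a2
   | (inl u, true) => u \in b1
   | (inr u, true) => u \in b2 end].

Lemma mkA1 (a1 a2 b1 b2 : {set T}) : A1 (mk a1 a2 b1 b2) = a1.
Proof. by apply/setP => u; rewrite !inE. Qed.
Lemma mkA2 (a1 a2 b1 b2 : {set T}) : A2 (mk a1 a2 b1 b2) = a2.
Proof. by apply/setP => u; rewrite !inE. Qed.
Lemma mkB1 (a1 a2 b1 b2 : {set T}) : B1 (mk a1 a2 b1 b2) = b1.
Proof. by apply/setP => u; rewrite !inE. Qed.
Lemma mkB2 (a1 a2 b1 b2 : {set T}) : B2 (mk a1 a2 b1 b2) = b2.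
Proof. by apply/setP => u; rewrite !inE. Qed.

Lemma card_mk (a1 a2 b1 b2 : {set T}) : #|mk a1 a2 b1 b2| = #|a1| + #|a2| + #|b1| + #|b2|.
Proof. by rewrite card_split mkA1 mkA2 mkB1 mkB2. Qed.

Lemma indep_mk (a1 a2 b1 b2 : {set T}) :
  independent e a1 -> independent e a2 ->
  (forall u, u \in a1 -> u \notin b1) -> (forall u, u \in a2 -> u \notin b2) ->
  (b1 = set0 \/ b2 = set0) -> independent E (mk a1 a2 b1 b2).
Proof.
move=> i1 i2 d1 d2 hb x y.
case: x => [[u|u] [|]]; case: y => [[v|v] [|]]; rewrite !inE /= => hx hy //.
all: try (by apply/negP => /eqP [] huv; subst v; first [move: (d1 _ hy); rewrite hx | move: (d1 _ hx); rewrite hy | move: (d2 _ hy); rewrite hx | move: (d2 _ hx); rewrite hy]).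
all: try (by case: hb => hb; subst; rewrite inE in hx hy).
all: try (by apply: i1).
all: by apply: i2.
Qed.

Lemma indep_parts M : independent E M ->
  [/\ independent e (A1 M), independent e (A2 M),
      (forall u, u \in A1 M -> u \notin B1 M),
      (forall u, u \in A2 M -> u \notin B2 M) &
      (B1 M = set0 \/ B2 M = set0)].
Proof.
move=> hM; split.
- move=> u v; rewrite !inE => hu hv; exact: (hM _ _ hu hv).
- move=> u v; rewrite !inE => hu hv; exact: (hM _ _ hu hv).
- move=> u; rewrite !inE => hu; apply/negP => hv.
  by move: (hM _ _ hu hv); rewrite /= eqxx.
- move=> u; rewrite !inE => hu; apply/negP => hv.
  by move: (hM _ _ hu hv); rewrite /= eqxx.
- case: (set_0Vmem (B1 M)) => [->|[u hu]]; first by left.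
  right; apply/setP => v; rewrite !inE; apply/negP => hv.
  by rewrite inE in hu; move: (hM _ _ hu hv).
Qed.

Definition indb (S : {set T}) := [forall x in S, forall y in S, ~~ e x y].

Lemma indbP S : reflect (independent e S) (indb S).
Proof.
apply: (iffP forall_inP) => h.
- by move=> x y hx hy; move/forallP: (h x hx) => /(_ y) /implyP; apply.
- by move=> x hx; apply/forallP => y; apply/implyP => hy; apply: h.
Qed.

Lemma exists_max : exists K, max_independent e K.
Proof.
have h0 : indb set0 by apply/indbP => x y; rewrite inE.
case: (arg_maxnP (fun S : {set T} => #|S|) h0) => K /indbP hK hmax.
exists K; split => // S' /indbP hS'; exact: hmax.
Qed.

Lemma disj_card (a b : {set T}) : (forall u, u \in a -> u \notin b) ->
  #|a| + #|b| <= #|T|.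
Proof.
move=> d; rewrite -cardUI.
have -> : #|[predI a & b]| = 0.
  apply: eq_card0 => u.
  rewrite !inE; apply/negP => /andP [ha hb]; by move: (d _ ha); rewrite hb.
by rewrite addn0 max_card.
Qed.

Variable K : {set T}.
Hypothesis hK : max_independent e K.

Lemma bound M : independent E M -> #|M| <= #|T| + #|K|.
Proof.
move=> hM; case: (indep_parts hM) => i1 i2 d1 d2 hb.
rewrite card_split.
have c1 := disj_card d1; have c2 := disj_card d2.
have k1 := proj2 hK _ i1; have k2 := proj2 hK _ i2.
case: hb => ->; rewrite cards0; lia.
Qed.

Lemma witness : independent E (mk set0 K setT set0) /\
  #|mk set0 K setT set0| = #|T| + #|K|.
Proof.
split; last by rewrite card_mk !cards0 cardsT; lia.
apply: indep_mk.
- by move=> x y; rewrite inE.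
- exact: (proj1 hK).
- by move=> u; rewrite inE.
- by move=> u; rewrite inE.
- by right.
Qed.

Lemma max_ge M : max_independent E M -> #|T| + #|K| <= #|M|.
Proof.
case=> _ h; case: witness => w1 w2; rewrite -w2; exact: h.
Qed.

Lemma max_side2 M : max_independent E M -> B2 M = set0 -> max_independent e (A2 M).
Proof.
move=> hM hb; have ge := max_ge hM.
case: (indep_parts (proj1 hM)) => i1 i2 d1 d2 _.
split => // S hS.
have := proj2 hK _ hS; have := disj_card d1.
move: ge; rewrite card_split hb cards0; lia.
Qed.

Lemma max_side1 M : max_independent E M -> B1 M = set0 -> max_independent e (A1 M).
Proof.
move=> hM hb; have ge := max_ge hM.
case: (indep_parts (proj1 hM)) => i1 i2 d1 d2 _.
split => // S hS.
have := proj2 hK _ hS; have := disj_card d2.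
move: ge; rewrite card_split hb cards0; lia.
Qed.

Lemma is_max M : independent E M -> #|M| = #|T| + #|K| -> max_independent E M.
Proof. by move=> h c; split => // S hS; rewrite c; apply: bound. Qed.

Lemma build1 S K2 : independent E S -> B2 S = set0 -> max_independent e K2 ->
  A2 S \subset K2 -> exists M, max_independent E M /\ S \subset M.
Proof.
move=> hS hb hK2 sub; case: (indep_parts hS) => i1 i2 d1 d2 _.
exists (mk (A1 S) K2 (~: A1 S) set0); split.
- apply: is_max.
  + apply: indep_mk => //; first exact: (proj1 hK2).
    * by move=> u hu; rewrite inE hu.
    * by move=> u; rewrite inE.
    * by right.
  + rewrite card_mk cards0 addn0 -addnA (addnC #|K2|) addnA cardsC.
    by have := proj2 hK2 _ (proj1 hK); have := proj2 hK _ (proj1 hK2); lia.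
- apply/subsetP => -[[u|u] []] hx; rewrite !inE.
  + by apply/negP => hu; have := d1 u; rewrite !inE hu hx => /(_ isT).
  + by [].
  + have h : u \in B2 S by rewrite inE.
    by rewrite hb inE in h.
  + by move/subsetP: sub => /(_ u); rewrite inE; apply.
Qed.



Lemma build2 S K1 : independent E S -> B1 S = set0 -> max_independent e K1 ->
  A1 S \subset K1 -> exists M, max_independent E M /\ S \subset M.
Proof.
move=> hS hb hK1 sub; case: (indep_parts hS) => i1 i2 d1 d2 _.
exists (mk K1 (A2 S) set0 (~: A2 S)); split.
- apply: is_max.
  + apply: indep_mk => //; first exact: (proj1 hK1).
    * by move=> u; rewrite inE.
    * by move=> u hu; rewrite inE hu.
    * by left.
  + rewrite card_mk cards0 addn0 -addnA cardsC.
    by have := proj2 hK1 _ (proj1 hK); have := proj2 hK _ (proj1 hK1); lia.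
- apply/subsetP => -[[u|u] []] hx; rewrite !inE.
  + have h : u \in B1 S by rewrite inE.
    by rewrite hb inE in h.
  + by move/subsetP: sub => /(_ u); rewrite inE; apply.
  + by apply/negP => hu; have := d2 u; rewrite !inE hu hx => /(_ isT).
  + by [].
Qed.
End Aux.

Theorem lemma3 (T : finType) (e : rel T) (e_sym : symmetric e)
  (e_irr : irreflexive e) (s : nat) (hs : 1 <= s) :
  E_s (pi_rel e e) s <-> E_s e s.-1.
Proof.
have [K hK] := exists_max e.
split.
- move=> HE t /andP [t1 ts] S hS cS.
  case: (set_0Vmem S) => [S0|[u0 hu0]]; first by rewrite S0 cards0 in cS; lia.
  pose S' := mk set0 S [set u0] set0.
  have iS' : independent (pi_rel e e) S'.
    apply: indep_mk.
    all: try (by move=> x y; rewrite inE).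
    all: try (by move=> u; rewrite !inE).
    all: first [by right | exact: hS | idtac].
  have cS' : #|S'| = t.+1 by rewrite card_mk !cards0 cards1; lia.
  have ht : 1 <= t.+1 <= s by apply/andP; lia.
  case: (HE t.+1 ht S' iS' cS') => M [hM sub].
  have hB2 : B2 M = set0.
    case: (indep_parts (proj1 hM)) => _ _ _ _ [] // hB1.
    have : u0 \in B1 M.
      rewrite inE; move/subsetP: sub; apply; by rewrite inE /= inE.
    by rewrite hB1 inE.
  exists (A2 M); split; first exact: (max_side2 hK hM hB2).
  apply/subsetP => u hu; rewrite inE; move/subsetP: sub; apply; by rewrite inE /=.
- move=> HE t /andP [t1 ts] S hS cS.
  case: (indep_parts hS) => i1 i2 d1 d2 hb.
  have ext : forall A : {set T}, independent e A -> #|A| <= s.-1 ->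
      exists K2, max_independent e K2 /\ A \subset K2.
    move=> A hA cA; case: (posnP #|A|) => [A0|Apos].
      by exists K; split => //; rewrite (cards0_eq A0) sub0set.
    apply: (HE #|A|) => //; by apply/andP.
  have cs := card_split S; rewrite cS in cs.
  case E2: ((B2 S == set0) && (#|A2 S| <= s.-1)).
    move/andP: E2 => [/eqP b2 c2]; case: (ext _ i2 c2) => K2 [hK2 sub].
    exact: (build1 hK hS b2 hK2 sub).
  case E1: ((B1 S == set0) && (#|A1 S| <= s.-1)).
    move/andP: E1 => [/eqP b1 c1]; case: (ext _ i1 c1) => K1 [hK1 sub].
    exact: (build2 hK hS b1 hK1 sub).
  exfalso.
  have nz : forall A : {set T}, A = set0 \/ 0 < #|A|.
    move=> A; case: (set_0Vmem A) => [->|[u hu]]; [by left | right].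
    by apply/card_gt0P; exists u.
  case: hb => hb.
  + rewrite hb eqxx /= in E1; move/negbT: E1; rewrite -ltnNge => E1.
    case: (nz (B2 S)) => h2.
    * rewrite h2 eqxx /= in E2; move/negbT: E2; rewrite -ltnNge => E2.
      rewrite hb h2 !cards0 in cs; lia.
    * rewrite hb cards0 in cs; lia.
  + rewrite hb eqxx /= in E2; move/negbT: E2; rewrite -ltnNge => E2.
    case: (nz (B1 S)) => h1.
    * rewrite h1 eqxx /= in E1; move/negbT: E1; rewrite -ltnNge => E1.
      rewrite hb h1 !cards0 in cs; lia.
    * rewrite hb cards0 in cs; lia.
Qed.
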